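(* Let $2\le r<s$ be coprime integers and let $\pi=\langle u,v\mid u^r=v^s\rangle$ be the group of the $(r,s)$ torus knot, with meridian $m=u^nv^{-k}$ and longitude $l=v^s m^{-rs}$, where $k,n\in\mathbb{Z}$ satisfy $-rk+sn=1$. Let $X,Y\in H[\pi]$ be the images of $m,l$. Then $Y\in H^+[\pi][X^{\pm1}]$; i.e. every torus knot satisfies the Brumfiel–Hilden condition.
   Context: For a group $\pi$, the Brumfiel–Hilden algebra is $H[\pi]:=\mathbb{C}[\pi]/I$, where $I$ is the two-sided ideal of the group algebra generated by all elements $g(h+h^{-1})-(h+h^{-1})g$ with $g,h\in\pi$. $H^+[\pi]\subset H[\pi]$ is the subalgebra generated by the images of all $g+g^{-1}$, $g\in\pi$. For an element $X\in H[\pi]$ which is the image of a group element, $H^+[\pi][X^{\pm1}]$ denotes the subalgebra of $H[\pi]$ generated by $H^+[\pi]$, $X$ and $X^{-1}$. A knot $K\subset S^3$ with group $\pi=\pi_1(S^3\setminus K)$ and standard (commuting) meridian $m$ and longitude $l$ is said to satisfy the Brumfiel–Hilden condition if the image $Y$ of $l$ in $H[\pi]$ lies in $H^+[\pi][X^{\pm1}]$, where $X$ is the image of $m$. The element $m$ does not depend on the choice of the solution $(k,n)$. *)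

(* Defs.v *)
From HB Require Import structures.
From mathcomp Require Import all_boot all_order all_algebra.
Set Implicit Arguments. Unset Strict Implicit. Unset Printing Implicit Defensive.
Import Order.TTheory GRing.Theory Num.Theory.
Local Open Scope ring_scope.

(* Words in the generators u, v of pi = < u, v | u^r = v^s > and their inverses. *)
Inductive letter := LU | LUi | LV | LVi.
Definition word := seq letter.

Definition linv (x : letter) : letter :=
  match x with LU => LUi | LUi => LU | LV => LVi | LVi => LV end.

Definition winv (w : word) : word := rev (map linv w).

Definition wpow (x : letter) (z : int) : word :=
  if (0 <= z)%R then nseq `|z|%N x else nseq `|z|%N (linv x).

Definition meridian (k n : int) : word := wpow LU n ++ wpow LV (- k).

Definition longitude (r s : nat) (k n : int) : word :=
  nseq s LV ++ flatten (nseq (r * s) (winv (meridian k n))).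

Section Rep.
Variables (F : comNzRingType) (A : algType F) (a ai b bi : A).

Definition evl (x : letter) : A :=
  match x with LU => a | LUi => ai | LV => b | LVi => bi end.
Definition evw (w : word) : A := foldr (fun x acc => evl x * acc) 1 w.

(* (a, ai, b, bi) define an algebra homomorphism C[pi] -> A (i.e. a group hom
   pi -> A^x, with ai, bi the inverses of a, b and a^r = b^s) which kills the
   Brumfiel-Hilden ideal I, i.e. factors through H[pi]. *)
Definition is_BHrep (r s : nat) : Prop :=
  [/\ a * ai = 1 /\ ai * a = 1, b * bi = 1 /\ bi * b = 1, a ^+ r = b ^+ s &
      (forall g h : word,
        evw g * (evw h + evw (winv h)) = (evw h + evw (winv h)) * evw g)].
End Rep.

(* Formal expressions generating the subalgebra H^+[pi][X^{+-1}]: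
   scalars, the elements g + g^{-1} (g in pi), X, X^{-1}, sums, products. *)
Inductive bhterm (F : Type) :=
| TC of F
| TSym of word
| TX
| TXi
| TAdd of bhterm F & bhterm F
| TMul of bhterm F & bhterm F.
Arguments TX {F}. Arguments TXi {F}.

Section Eval.
Variables (F : comNzRingType) (A : algType F) (a ai b bi : A) (k n : int).
Fixpoint evt (t : bhterm F) : A :=
  match t with
  | TC c => c%:A
  | TSym g => evw a ai b bi g + evw a ai b bi (winv g)
  | TX => evw a ai b bi (meridian k n)
  | TXi => evw a ai b bi (winv (meridian k n))
  | TAdd t1 t2 => evt t1 + evt t2
  | TMul t1 t2 => evt t1 * evt t2
  end.
End Eval.

(* Main.v *)
Require Import Defs.
From HB Require Import structures.
From mathcomp Require Import all_boot all_order all_algebra.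
From mathcomp Require Import zify.
Import Order.TTheory GRing.Theory Num.Theory.
Local Open Scope ring_scope.

Fixpoint chebP {F : numClosedFieldType} (j : nat) : bhterm F * bhterm F :=
  match j with
  | 0 => (TC 0, TC 1)
  | j.+1 => let p := @chebP F j in
            (p.2, TAdd (TMul (@TSym F [:: LU]) p.2) (TMul (TC (-1)) p.1))
  end.
Definition cheb {F : numClosedFieldType} (j : nat) : bhterm F := (chebP j).1.

Fixpoint powT {F : Type} (one : F) (t : bhterm F) (j : nat) : bhterm F :=
  match j with 0 => TC one | j.+1 => TMul t (powT one t j) end.

Lemma sgn1 (r s : nat) (k n : int) : (2 <= r)%N -> (r < s)%N -> - (r%:Z * k) + s%:Z * n = 1 -> 0 <= n -> 0 < k /\ (`|n| * s = (r * `|k|).+1)%N.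
Proof. move=> Hr Hs; case: k => K; case: n => N; rewrite ?NegzE /= => Heq hn; try nia;
 case: K Heq => [|K] Heq; case: N hn Heq => [|N] hn Heq; rewrite ?muln0 ?mulr0 ?mul0r ?muln0 in Heq *; nia. Qed.
Lemma sgn2 (r s : nat) (k n : int) : (2 <= r)%N -> (r < s)%N -> - (r%:Z * k) + s%:Z * n = 1 -> ~~ (0 <= n) -> 0 <= - k /\ (r * `|k| = (`|n| * s).+1)%N.
Proof. move=> Hr Hs; case: k => K; case: n => N; rewrite ?NegzE /= => Heq hn; try nia;
 case: K Heq => [|K] Heq; case: N hn Heq => [|N] hn Heq; rewrite ?muln0 ?mulr0 ?mul0r ?muln0 in Heq *; nia. Qed.

Lemma zm (V : zmodType) (p q q' p' : V) : p - q + (q' - p') - (q' - q) = p - p'.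
Proof. by rewrite (addrC q') addrA addrKA opprK addrAC subrK. Qed.

Definition BHT (F : numClosedFieldType) (r s : nat) : bhterm F :=
  TMul (TAdd (TMul (TC (2 : F)^-1) (@TSym F (nseq r LU)))
             (TMul (TC (2 : F)^-1) (TMul (cheb r)
                (TAdd (powT 1 TX s) (TMul (TC (-1)) (powT 1 TXi s))))))
       (powT 1 TXi (r * s)).

Section Proofs.
Variables (F : numClosedFieldType) (A : algType F) (a ai b bi : A) (r s : nat) (k n : int).
Hypothesis HB : is_BHrep a ai b bi r s.
Local Notation ev := (evw a ai b bi).
Local Notation evt := (evt a ai b bi k n).

Lemma ev_nil : ev [::] = 1. Proof. by []. Qed.
Lemma ev_cons x w : ev (x :: w) = evl a ai b bi x * ev w. Proof. by []. Qed.
Lemma ev_cat w1 w2 : ev (w1 ++ w2) = ev w1 * ev w2.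
Proof. elim: w1 => [|x w IH]; first by rewrite cat0s ev_nil mul1r.
by rewrite cat_cons !ev_cons IH mulrA. Qed.
Lemma ev_nseq j x : ev (nseq j x) = evl a ai b bi x ^+ j.
Proof. elim: j => [|j IH]; first by rewrite expr0.
by rewrite [nseq _ _]/= ev_cons IH exprS. Qed.
Lemma ev_flat j w : ev (flatten (nseq j w)) = ev w ^+ j.
Proof. elim: j => [|j IH]; first by rewrite expr0.
by rewrite [flatten _]/= ev_cat IH exprS. Qed.
Lemma winv_cons x w : winv (x :: w) = winv w ++ [:: linv x].
Proof. by rewrite /winv /= rev_cons cats1. Qed.
Lemma winv_nseq j x : winv (nseq j x) = nseq j (linv x).
Proof. by rewrite /winv map_nseq rev_nseq. Qed.

Let Ha1 : a * ai = 1. Proof. by case: HB => -[]. Qed.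
Let Ha2 : ai * a = 1. Proof. by case: HB => -[]. Qed.
Let Hb1 : b * bi = 1. Proof. by case: HB => _ []. Qed.
Let Hb2 : bi * b = 1. Proof. by case: HB => _ []. Qed.
Let Hrs : a ^+ r = b ^+ s. Proof. by case: HB. Qed.
Let Hc : forall g h : word, ev g * (ev h + ev (winv h)) = (ev h + ev (winv h)) * ev g.
Proof. by case: HB. Qed.

Lemma letter_inv x : evl a ai b bi (linv x) * evl a ai b bi x = 1 /\
                     evl a ai b bi x * evl a ai b bi (linv x) = 1.
Proof. by case: x. Qed.

Lemma ev_winvK w : ev (winv w) * ev w = 1.
Proof.
elim: w => [|x w IH]; first by rewrite /= mulr1.
rewrite winv_cons ev_cat ev_cons ev_cons ev_nil mulr1 -mulrA (mulrA _ (evl _ _ _ _ x)).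
by rewrite (letter_inv x).1 mul1r.
Qed.
Lemma ev_winvK' w : ev w * ev (winv w) = 1.
Proof.
elim: w => [|x w IH]; first by rewrite /= mulr1.
rewrite winv_cons ev_cat ev_cons ev_cons ev_nil mulr1 -mulrA (mulrA (ev w)) IH mul1r.
by rewrite (letter_inv x).2.
Qed.

Definition Cm (y : A) := forall w, y * ev w = ev w * y.
Lemma Cm_add y z : Cm y -> Cm z -> Cm (y + z).
Proof. by move=> Hy Hz w; rewrite mulrDl mulrDr Hy Hz. Qed.
Lemma Cm_mul y z : Cm y -> Cm z -> Cm (y * z).
Proof. by move=> Hy Hz w; rewrite -mulrA Hz mulrA Hy mulrA. Qed.
Lemma Cm_opp y : Cm y -> Cm (- y).
Proof. by move=> Hy w; rewrite mulNr mulrN Hy. Qed.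
Lemma Cm_scale (c : F) y : Cm y -> Cm (c *: y).
Proof. by move=> Hy w; rewrite -scalerAl Hy scalerAr. Qed.
Lemma Cm_alg (c : F) : Cm (c%:A).
Proof. by move=> w; rewrite mulr_algl mulr_algr. Qed.
Lemma Cm_sym h : Cm (ev h + ev (winv h)).
Proof. by move=> w; rewrite Hc. Qed.

Lemma Cm_letters y : (forall x, GRing.comm y (evl a ai b bi x)) -> Cm y.
Proof.
move=> Hx w; elim: w => [|x w IH]; first by rewrite ev_nil mulr1 mul1r.
by rewrite ev_cons mulrA [y * _]Hx -!mulrA IH.
Qed.

Lemma powinv (x y : A) j : x * y = 1 -> GRing.comm x y -> x ^+ j * y ^+ j = 1.
Proof. by move=> Hxy Hc'; rewrite -exprMn_comm // Hxy expr1n. Qed.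

Let caai : GRing.comm a ai. Proof. by rewrite /GRing.comm Ha1 Ha2. Qed.
Let cbbi : GRing.comm b bi. Proof. by rewrite /GRing.comm Hb1 Hb2. Qed.

Lemma bis : bi ^+ s = ai ^+ r.
Proof.
have H1 : a ^+ r * ai ^+ r = 1 by apply: powinv.
have H2 : bi ^+ s * b ^+ s = 1 by apply: powinv => //; apply/commr_sym.
by rewrite -[bi ^+ s]mulr1 -H1 mulrA Hrs H2 mul1r.
Qed.

Lemma Cm_ar : Cm (a ^+ r).
Proof.
apply: Cm_letters => -[] /=.
- exact/commr_sym/commrX.
- exact/commr_sym/commrX/commr_sym.
- by rewrite Hrs; exact/commr_sym/commrX.
- by rewrite Hrs; exact/commr_sym/commrX/commr_sym.
Qed.
Lemma Cm_air : Cm (ai ^+ r).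
Proof.
apply: Cm_letters => -[] /=.
- exact/commr_sym/commrX/commr_sym.
- exact/commr_sym/commrX.
- by rewrite -bis; exact/commr_sym/commrX.
- by rewrite -bis; exact/commr_sym/commrX/commr_sym.
Qed.

Lemma ev_LU : ev [:: LU] + ev (winv [:: LU]) = a + ai.
Proof. by rewrite /= !mulr1. Qed.

Lemma cheb_spec j : Cm (evt (cheb j)) /\ Cm (evt (chebP j).2) /\
  evt (cheb j) * (a - ai) = a ^+ j - ai ^+ j /\
  evt (chebP j).2 * (a - ai) = a ^+ j.+1 - ai ^+ j.+1.
Proof.
elim: j => [|j [C1 [C2 [E1 E2]]]].
  rewrite /cheb /=; split; first exact: Cm_alg.
  split; first exact: Cm_alg.
  by rewrite scale0r mul0r !expr0 subrr scale1r mul1r !expr1.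
rewrite /cheb /= -/(cheb j).
have -> : a * 1 + ai * 1 = ev [:: LU] + ev (winv [:: LU]) by [].
split => //; split.
  by apply: Cm_add; apply: Cm_mul => //; try exact: Cm_sym; exact: Cm_alg.
split => //.
rewrite ev_LU mulrDl -!mulrA E2 E1 mulr_algl scaleN1r.
have e1 : a * ai ^+ j.+1 = ai ^+ j by rewrite exprS mulrA Ha1 mul1r.
have e2 : ai * a ^+ j.+1 = a ^+ j by rewrite exprS mulrA Ha2 mul1r.
by rewrite mulrDl !mulrBr e1 e2 -!exprS zm.
Qed.


Lemma zm2 (V : zmodType) (x y : V) : x + y - (x - y) = y + y.
Proof. by rewrite opprB addrA addrAC (addrC x y) addrK. Qed.

Local Notation c := (evt (cheb r)).

Lemma Cm_c : Cm c. Proof. by case: (cheb_spec r). Qed.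
Lemma Ec : c * (a - ai) = a ^+ r - ai ^+ r. Proof. by case: (cheb_spec r) => _ [_ []]. Qed.

Let h2 : (2 : F) != 0. Proof. by rewrite pnatr_eq0. Qed.

Lemma half_twice (x : A) : (2 : F)^-1 *: (x + x) = x.
Proof. by rewrite -mulr2n -scaler_nat scalerA mulVf // scale1r. Qed.

Lemma Cm_ca : Cm (c * a).
Proof.
have -> : c * a = (2 : F)^-1 *: (c * (ev [:: LU] + ev (winv [:: LU])) + c * (a - ai)).
  by rewrite ev_LU mulrDr mulrBr addrACA subrr addr0 half_twice.
apply: Cm_scale; apply: Cm_add; first by apply: Cm_mul; [exact: Cm_c | exact: Cm_sym].
by rewrite Ec; apply: Cm_add; [exact: Cm_ar | apply: Cm_opp; exact: Cm_air].
Qed.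

Lemma Cm_cai : Cm (c * ai).
Proof.
have -> : c * ai = (2 : F)^-1 *: (c * (ev [:: LU] + ev (winv [:: LU])) - c * (a - ai)).
  by rewrite ev_LU mulrDr mulrBr zm2 half_twice.
apply: Cm_scale; apply: Cm_add; first by apply: Cm_mul; [exact: Cm_c | exact: Cm_sym].
by apply: Cm_opp; rewrite Ec; apply: Cm_add; [exact: Cm_ar | apply: Cm_opp; exact: Cm_air].
Qed.

Definition WG (x : A) := exists w, x = ev w.
Lemma WG_mul x y : WG x -> WG y -> WG (x * y).
Proof. by move=> [w1 ->] [w2 ->]; exists (w1 ++ w2); rewrite ev_cat. Qed.
Lemma WG_exp x j : WG x -> WG (x ^+ j).
Proof. by move=> [w ->]; exists (flatten (nseq j w)); rewrite ev_flat. Qed.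
Lemma WG_ev w : WG (ev w). Proof. by exists w. Qed.
Lemma WG_a : WG a. Proof. by exists [:: LU]; rewrite /= mulr1. Qed.
Lemma WG_ai : WG ai. Proof. by exists [:: LUi]; rewrite /= mulr1. Qed.

Lemma L1a x : WG x -> c * x * a = c * a * x.
Proof. by move=> [w ->]; rewrite Cm_c -mulrA -Cm_ca. Qed.
Lemma L1ai x : WG x -> c * x * ai = c * ai * x.
Proof. by move=> [w ->]; rewrite Cm_c -mulrA -Cm_cai. Qed.

Lemma L2gen (g : A) : WG g -> (forall x, WG x -> c * x * g = c * g * x) ->
  forall j x, WG x -> c * x * g ^+ j = c * g ^+ j * x.
Proof.
move=> Wg H1; elim => [|j IH] x Hx; first by rewrite expr0 !mulr1.
rewrite exprSr mulrA IH // -(mulrA c) H1; last by apply: WG_mul => //; exact: WG_exp.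
by rewrite -[g ^+ j * g]exprSr exprS !mulrA.
Qed.

Local Notation P := (ev (wpow LU n)).
Local Notation Q := (ev (wpow LV (- k))).
Local Notation X := (ev (meridian k n)).
Local Notation Xi := (ev (winv (meridian k n))).

Lemma LP x : WG x -> c * x * P = c * P * x.
Proof.
rewrite /wpow; case: ifP => _; rewrite ev_nseq /=.
  by apply: L2gen; [exact: WG_a | exact: L1a].
by apply: L2gen; [exact: WG_ai | exact: L1ai].
Qed.

Lemma mainX j : c * X ^+ j = c * P ^+ j * Q ^+ j.
Proof.
have EX : X = P * Q by rewrite /meridian ev_cat.
elim: j => [|j IH]; first by rewrite !expr0 !mulr1.
rewrite exprSr mulrA IH EX mulrA -(mulrA c) LP; last first.
  by apply: WG_mul; apply: WG_exp; apply: WG_ev.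
by rewrite [in RHS]exprS [in RHS]exprSr !mulrA.
Qed.

Hypothesis Hr : (2 <= r)%N.
Hypothesis Hs : (r < s)%N.
Hypothesis Heq : - (r%:Z * k) + s%:Z * n = 1.

Lemma PQs : P ^+ s * Q ^+ s = a.
Proof.
rewrite /wpow; case: (boolP (0 <= n)) => hn.
  have [hk E] := @sgn1 r s k n Hr Hs Heq hn.
  have hk' : ~~ (0 <= - k) by rewrite oppr_ge0 -ltNge.
  rewrite (negbTE hk') !ev_nseq /= abszN.
  rewrite -!exprM E [(`|k| * s)%N]mulnC [bi ^+ _]exprM bis -exprM exprS -mulrA powinv //.
  by rewrite mulr1.
have [hk E] := @sgn2 r s k n Hr Hs Heq hn.
rewrite hk !ev_nseq /= abszN.
rewrite -!exprM [(`|k| * s)%N]mulnC [b ^+ _]exprM -Hrs -exprM E exprSr mulrA powinv //.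
  by rewrite mul1r.
Qed.

Lemma cXs : c * X ^+ s = c * a.
Proof. by rewrite mainX -mulrA PQs. Qed.

Lemma cXis : c * Xi ^+ s = c * ai.
Proof.
have XXi : X ^+ s * Xi ^+ s = 1.
  apply: powinv; first exact: ev_winvK'.
  by rewrite /GRing.comm ev_winvK ev_winvK'.
have h : c * Xi ^+ s * a = c.
  by rewrite L1a; [rewrite -cXs -mulrA XXi mulr1 | apply: WG_exp; apply: WG_ev].
by rewrite -[c * Xi ^+ s]mulr1 -Ha1 mulrA h.
Qed.

Lemma evt_powT (t : bhterm F) j : evt (powT 1 t j) = evt t ^+ j.
Proof.
elim: j => [|j IH]; first by rewrite /= scale1r expr0.
by rewrite [powT _ _ _]/= [evt (TMul _ _)]/= IH exprS.
Qed.

Lemma final : evt (BHT F r s) = ev (longitude r s k n).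
Proof.
rewrite /BHT /longitude ev_cat ev_nseq ev_flat /=.
rewrite !evt_powT /= winv_nseq !ev_nseq /=.
rewrite !mulr_algl scaleN1r mulrDr mulrN cXs cXis -mulrBr Ec.
rewrite -scalerDr addrACA subrr addr0 half_twice.
by rewrite -Hrs.
Qed.
End Proofs.

Theorem theorem5p1 (F : numClosedFieldType) (r s : nat) (k n : int) :
  (2 <= r)%N -> (r < s)%N -> coprime r s ->
  - (r%:Z * k) + s%:Z * n = 1 ->
  exists T : bhterm F,
    forall (A : algType F) (a ai b bi : A),
      is_BHrep a ai b bi r s ->
      evt a ai b bi k n T = evw a ai b bi (longitude r s k n).
Proof.
move=> Hr Hs _ Heq; exists (BHT F r s) => A a ai b bi HB.
exact: (@final F A a ai b bi r s k n HB Hr Hs Heq).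
Qed.
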